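(* Let $X$ be a locally compact Hausdorff totally disconnected space, $G$ a discrete group, $K$ a field, $\phi=(\phi_g,X_g,X)_{g\in G}$ a partial action of $G$ on $X$ (with $X_g$ open), and $I$ an ideal of $C_K(X)\rtimes_\phi G$. With $V_I=\bigcup\{\operatorname{supp}(f): f\delta_\varepsilon\in I\}$, one has $C_K(V_I)\rtimes_{\phi|_{V_I}}G\subseteq I$, and $C_K(V_I)\rtimes_{\phi|_{V_I}}G$ is the largest graded ideal of $C_K(X)\rtimes_\phi G$ contained in $I$.
   Context: A partial action of $G$ (identity $\varepsilon$) on a topological space $X$ is $(\phi_g,X_g,X)_{g\in G}$ with $X_g$ open, homeomorphisms $\phi_g:X_{g^{-1}}\to X_g$, and (i) $X_\varepsilon=X$, $\phi_\varepsilon=\operatorname{id}$; (ii) $\phi_g(X_{g^{-1}}\cap X_h)=X_g\cap X_{gh}$; (iii) $\phi_g\phi_h(x)=\phi_{gh}(x)$ for $x\in X_{h^{-1}}\cap X_{h^{-1}g^{-1}}$. $V\subseteq X$ is invariant if $\phi_{g^{-1}}(X_g\cap V)\subseteq X_{g^{-1}}\cap V$ for all $g$ (and $V_I$ is open invariant). $C_K(Y)$ is the algebra of compactly supported locally constant functions $Y\to K$; $C_K(W)$ for open $W$ is the ideal of functions vanishing off $W$; $\phi_g(f)=f\circ\phi_{g^{-1}}$. The partial skew group ring $C_K(X)\rtimes_\phi G$ consists of finite sums $\sum a_g\delta_g$, $a_g\in C_K(X_g)$, with product $(a_g\delta_g)(b_h\delta_h)=\phi_g(\phi_{g^{-1}}(a_g)b_h)\delta_{gh}$,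 graded by $\deg(a_g\delta_g)=g$; for open invariant $V$, $C_K(V)\rtimes_{\phi|_V}G=\{\sum a_g\delta_g: a_g\in C_K(V\cap X_g)\}$. An ideal is graded if it is the direct sum of its intersections with the homogeneous components. *)

(* Defs.v *)
From HB Require Import structures.
From mathcomp Require Import all_boot all_order all_algebra.
From Stdlib Require Import List ClassicalEpsilon.
Set Implicit Arguments. Unset Strict Implicit. Unset Printing Implicit Defensive.
Import GRing.Theory.
Local Open Scope ring_scope.

Definition pif {A : Type} (P : Prop) (a b : A) : A :=
  if excluded_middle_informative P then a else b.

Record topology (X : Type) := Topology {
  is_open : (X -> Prop) -> Prop;
  open_full : is_open (fun _ => True);
  open_inter : forall U V, is_open U -> is_open V -> is_open (fun x => U x /\ V x);
  open_union : forall (I : Type) (F : I -> X -> Prop),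
      (forall i, is_open (F i)) -> is_open (fun x => exists i, F i x)
}.

Section Topo.
Variables (X : Type) (T : topology X).

Definition compact (A : X -> Prop) : Prop :=
  forall (I : Type) (F : I -> X -> Prop),
    (forall i, is_open T (F i)) -> (forall x, A x -> exists i, F i x) ->
    exists s : list I, forall x, A x -> exists i, In i s /\ F i x.

Definition closure (A : X -> Prop) : X -> Prop :=
  fun x => forall U, is_open T U -> U x -> exists y, U y /\ A y.

Definition hausdorff : Prop :=
  forall x y : X, x <> y -> exists U V, is_open T U /\ is_open T V /\ U x /\ V y /\
    (forall z, ~ (U z /\ V z)).

Definition locally_compact : Prop :=
  forall x : X, exists U C, is_open T U /\ U x /\ compact C /\ (forall y, U y -> C y).

Definition connected (A : X -> Prop) : Prop :=
  ~ (exists U V, is_open T U /\ is_open T V /\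
       (forall x, A x -> U x \/ V x) /\ (exists x, A x /\ U x) /\
       (exists x, A x /\ V x) /\ (forall x, ~ (A x /\ U x /\ V x))).

Definition totally_disconnected : Prop :=
  forall A : X -> Prop, connected A -> forall x y, A x -> A y -> x = y.
End Topo.

Record group_str (G : Type) := GroupStr {
  gmul : G -> G -> G;
  ginv : G -> G;
  gone : G;
  gmulA : forall a b c, gmul a (gmul b c) = gmul (gmul a b) c;
  gmul1 : forall a, gmul gone a = a;
  gmulr1 : forall a, gmul a gone = a;
  gmulV : forall a, gmul (ginv a) a = gone;
  gmulrV : forall a, gmul a (ginv a) = gone
}.

(* dom g = X_g ;  act g = phi_g, meaningful on X_{g^{-1}} *)
Record partial_action (X : Type) (T : topology X) (G : Type) (Gs : group_str G) :=
  PartialAction {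
  dom : G -> X -> Prop;
  act : G -> X -> X;
  dom_open : forall g, is_open T (dom g);
  act_into : forall g x, dom (ginv Gs g) x -> dom g (act g x);
  act_inj : forall g x y, dom (ginv Gs g) x -> dom (ginv Gs g) y ->
      act g x = act g y -> x = y;
  act_onto : forall g y, dom g y -> exists x, dom (ginv Gs g) x /\ act g x = y;
  act_cont : forall g U, is_open T U ->
      is_open T (fun x => dom (ginv Gs g) x /\ U (act g x));
  act_openmap : forall g U, is_open T U ->
      is_open T (fun y => exists x, dom (ginv Gs g) x /\ U x /\ act g x = y);
  dom_one : forall x, dom (gone Gs) x;
  act_one : forall x, act (gone Gs) x = x;
  act_dom : forall g h y,
      (dom g y /\ dom (gmul Gs g h) y) <->
      (exists x, dom (ginv Gs g) x /\ dom h x /\ act g x = y);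
  act_comp : forall g h x, dom (ginv Gs h) x ->
      dom (gmul Gs (ginv Gs h) (ginv Gs g)) x ->
      act g (act h x) = act (gmul Gs g h) x
}.

Section Alg.
Variables (X : Type) (T : topology X) (K : fieldType).

Definition supp (f : X -> K) : X -> Prop := fun x => f x <> 0.

Definition locally_constant (f : X -> K) : Prop :=
  forall x, exists U, is_open T U /\ U x /\ (forall y, U y -> f y = f x).

Definition in_CK (f : X -> K) : Prop :=
  locally_constant f /\ compact T (closure T (supp f)).

Definition in_CKW (W : X -> Prop) (f : X -> K) : Prop :=
  in_CK f /\ (forall x, ~ W x -> f x = 0).

Variables (G : Type) (Gs : group_str G) (phi : partial_action T Gs).

Definition phi_fun (g : G) (f : X -> K) : X -> K :=
  fun x => pif (dom phi g x) (f (act phi (ginv Gs g) x)) 0.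

(* elements of the partial pskew group ring: coefficient families a : G -> (X -> K),
   a g being the coefficient of delta_g *)
Definition pskew := G -> X -> K.

Definition supp_list (a : pskew) (s : list G) : Prop :=
  NoDup s /\ forall g, ~ In g s -> forall x, a g x = 0.

Definition in_skew (a : pskew) : Prop :=
  (exists s, supp_list a s) /\ forall g, in_CKW (dom phi g) (a g).

(* C_K(V) ⋊ G for V : elements with a_g in C_K(V ∩ X_g) *)
Definition in_skew_V (V : X -> Prop) (a : pskew) : Prop :=
  (exists s, supp_list a s) /\
  forall g, in_CKW (fun x => V x /\ dom phi g x) (a g).

Definition skew0 : pskew := fun _ _ => 0.
Definition skew_add (a b : pskew) : pskew := fun g x => a g x + b g x.
Definition skew_opp (a : pskew) : pskew := fun g x => - a g x.

(* product, computed using a support list s of a: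
   (a*b)_k = sum_{g in s} phi_g(phi_{g^{-1}}(a_g) b_{g^{-1}k}) *)
Definition skew_mul (s : list G) (a b : pskew) : pskew :=
  fun k x => \sum_(g <- s)
    phi_fun g (fun y => phi_fun (ginv Gs g) (a g) y * b (gmul Gs (ginv Gs g) k) y) x.

Definition is_ideal (J : pskew -> Prop) : Prop :=
  (forall a, J a -> in_skew a) /\
  J skew0 /\
  (forall a b, J a -> J b -> J (skew_add a b)) /\
  (forall a, J a -> J (skew_opp a)) /\
  (forall a b s, in_skew a -> supp_list a s -> J b -> J (skew_mul s a b)) /\
  (forall a b s, J a -> supp_list a s -> in_skew b -> J (skew_mul s a b)).

Definition hom_comp (g : G) (a : pskew) : pskew :=
  fun h => pif (h = g) (a g) (fun _ => 0).

(* graded: J is the sum of its intersections with the homogeneous components,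
   i.e. every homogeneous component of an element of J lies in J *)
Definition is_graded (J : pskew -> Prop) : Prop :=
  forall a g, J a -> J (hom_comp g a).

Definition delta_one (f : X -> K) : pskew :=
  fun h => pif (h = gone Gs) f (fun _ => 0).

Definition V_of (I : pskew -> Prop) : X -> Prop :=
  fun x => exists f, I (delta_one f) /\ supp f x.

End Alg.

(* Main.v *)
Require Import Defs.
From HB Require Import structures.
From mathcomp Require Import all_boot all_order all_algebra.
From Stdlib Require Import List ClassicalEpsilon Classical FunctionalExtensionality PropExtensionality.
Set Implicit Arguments. Unset Strict Implicit. Unset Printing Implicit Defensive.
Import GRing.Theory.
Local Open Scope ring_scope.

Lemma pif_T {A : Type} (P : Prop) (a b : A) : P -> pif P a b = a.
Proof. move=> HP; rewrite /pif; case: excluded_middle_informative => //. Qed.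
Lemma pif_F {A : Type} (P : Prop) (a b : A) : ~ P -> pif P a b = b.
Proof. move=> HP; rewrite /pif; case: excluded_middle_informative => //. Qed.

Section Topo.
Variables (X : Type) (T : topology X).

Lemma open_ext (A B : X -> Prop) : (forall x, A x <-> B x) -> is_open T A -> is_open T B.
Proof.
move=> H; have -> : B = A; last by [].
apply: functional_extensionality => x; apply: propositional_extensionality; by split => /H.
Qed.

Lemma open_nbhd (A : X -> Prop) :
  (forall x, A x -> exists U, is_open T U /\ U x /\ forall y, U y -> A y) -> is_open T A.
Proof.
move=> H.
pose Ix := {p : X * (X -> Prop) | is_open T p.2 /\ p.2 p.1 /\ forall y, p.2 y -> A y}.
have := @open_union X T Ix (fun i : Ix => (proj1_sig i).2) (fun i => proj1 (proj2_sig i)).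
apply: open_ext => x; split.
  by case=> [[[y U] [_ [_ HU]]]] /= /HU.
move=> /[dup] Ax /H [U [oU [Ux HU]]].
by exists (exist _ (x, U) (conj oU (conj Ux HU))).
Qed.

Lemma open_bigI (Ix : Type) (F : Ix -> X -> Prop) (s : list Ix) :
  (forall i, is_open T (F i)) -> is_open T (fun x => forall i, In i s -> F i x).
Proof.
move=> HF; elim: s => [|i s IH].
  by apply: open_ext (open_full T) => x; split => // _ i [].
apply: open_ext (open_inter (HF i) IH) => x; split.
  by move=> [H1 H2] j [<-|/H2].
by move=> H; split; [apply: H; left | move=> j Hj; apply: H; right].
Qed.

Lemma compact_ext (A B : X -> Prop) : (forall x, A x <-> B x) -> compact T A -> compact T B.
Proof.
move=> H cA Ix F oF cov.
have [s Hs] := cA Ix F oF (fun x Ax => cov x (proj1 (H x) Ax)).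
by exists s => x /H /Hs.
Qed.

Fixpoint somes (Ix : Type) (s : list (option Ix)) : list Ix :=
  match s with nil => nil | Some i :: r => i :: somes r | None :: r => somes r end.

Lemma in_somes (Ix : Type) (s : list (option Ix)) i : In (Some i) s -> In i (somes s).
Proof.
elim: s => [|[j|] s IH] //= [E|/IH H]; try by right. by case: E => ->; left. by []. all: by [].
Qed.

Lemma compact_sub (A B : X -> Prop) : compact T A -> (forall x, B x -> A x) ->
  is_open T (fun x => ~ B x) -> compact T B.
Proof.
move=> cA BA oB Ix F oF cov.
pose F' (o : option Ix) := match o with Some i => F i | None => fun x => ~ B x end.
have oF' : forall o, is_open T (F' o) by case.
have cov' : forall x, A x -> exists o, F' o x.
  move=> x _; case: (classic (B x)) => Bx; last by exists None.
  by have [i Hi] := cov x Bx; exists (Some i).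
have [s Hs] := cA _ F' oF' cov'.
exists (somes s) => x Bx; have [[i|] [Hi Fi]] := Hs x (BA x Bx) => //.
by exists i; split => //; apply: in_somes.
Qed.

Lemma compact_union (A B : X -> Prop) : compact T A -> compact T B ->
  compact T (fun x => A x \/ B x).
Proof.
move=> cA cB Ix F oF cov.
have [s1 H1] := cA Ix F oF (fun x Ax => cov x (or_introl Ax)).
have [s2 H2] := cB Ix F oF (fun x Bx => cov x (or_intror Bx)).
exists (s1 ++ s2) => x [/H1|/H2] => - [i [Hi Fi]]; exists i; split => //; apply: in_or_app; tauto.
Qed.

Lemma compact_empty (A : X -> Prop) : (forall x, ~ A x) -> compact T A.
Proof. by move=> H Ix F _ _; exists nil => x /H. Qed.

Lemma compact_closed (C : X -> Prop) : hausdorff T -> compact T C ->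
  is_open T (fun x => ~ C x).
Proof.
move=> hX cC; apply: open_nbhd => x nCx.
pose Ix := {p : (X -> Prop) * (X -> Prop) | is_open T p.1 /\ is_open T p.2 /\ p.1 x /\
   forall z, ~ (p.1 z /\ p.2 z)}.
have cov : forall c, C c -> exists i : Ix, (proj1_sig i).2 c.
  move=> c Cc; have nxc : x <> c by move=> E; apply: nCx; rewrite E.
  have [U [V [oU [oV [Ux [Vc D]]]]]] := hX x c nxc.
  by exists (exist _ (U, V) (conj oU (conj oV (conj Ux D)))).
have [s Hs] := cC Ix (fun i => (proj1_sig i).2) (fun i => proj1 (proj2 (proj2_sig i))) cov.
exists (fun z => forall i, In i s -> (proj1_sig i).1 z); split.
  by apply: open_bigI => i; case: (proj2_sig i).
split; first by move=> i _; case: (proj2_sig i) => _ [_ []].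
move=> z Hz Cz; have [i [Hi Vi]] := Hs z Cz.
by case: (proj2_sig i) => _ [_ [_ D]]; apply: (D z); split => //; apply: Hz.
Qed.

End Topo.

Section CK.
Variables (X : Type) (T : topology X) (K : fieldType).

Lemma lc_const (c : K) : locally_constant T (fun _ : X => c).
Proof. by move=> x; exists (fun _ => True); split => //; apply: open_full. Qed.

Lemma lc_op1 (op : K -> K) (f : X -> K) : locally_constant T f ->
  locally_constant T (fun y => op (f y)).
Proof. by move=> H x; have [U [oU [Ux HU]]] := H x; exists U; split => //; split => // y /HU ->. Qed.

Lemma lc_op2 (op : K -> K -> K) (f g : X -> K) : locally_constant T f ->
  locally_constant T g -> locally_constant T (fun y => op (f y) (g y)).
Proof.
move=> Hf Hg x; have [U [oU [Ux HU]]] := Hf x; have [V [oV [Vx HV]]] := Hg x.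
exists (fun y => U y /\ V y); split; first exact: open_inter.
by split => // y [/HU -> /HV ->].
Qed.

Lemma supp_open (f : X -> K) : locally_constant T f -> is_open T (supp f).
Proof.
move=> H; apply: open_nbhd => x Hx; have [U [oU [Ux HU]]] := H x.
by exists U; split; [done|split; [done|]] => y /HU; rewrite /supp => ->.
Qed.

Lemma nsupp_open (f : X -> K) : locally_constant T f -> is_open T (fun x => ~ supp f x).
Proof.
move=> H; apply: open_nbhd => x Hx; have [U [oU [Ux HU]]] := H x.
by exists U; split; [done|split; [done|]] => y /HU; rewrite /supp => ->.
Qed.

Lemma CK_iff (f : X -> K) : in_CK T f <-> locally_constant T f /\ compact T (supp f).
Proof.
have E : locally_constant T f -> forall x, Defs.closure T (supp f) x <-> supp f x.
  move=> H x; split; last by move=> sx U oU Ux; exists x.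
  move=> cx sx; have [U [oU [Ux HU]]] := H x.
  have [y [Uy sy]] := cx U oU Ux; apply: sy; rewrite (HU y Uy).
  by apply: NNPP.
split=> [[H c]|[H c]]; split => //; apply: compact_ext c => x; [|split]; by move/E: (x) => /(_ H) [].
Qed.

Lemma CK_sub (h b : X -> K) : in_CK T h -> locally_constant T b ->
  (forall x, supp b x -> supp h x) -> in_CK T b.
Proof.
move=> /CK_iff [lh ch] lb Hs; apply/CK_iff; split => //.
by apply: compact_sub ch Hs _; apply: nsupp_open.
Qed.

Lemma CK0 : in_CK T (fun _ : X => 0 : K).
Proof. apply/CK_iff; split; first exact: lc_const. by apply: compact_empty => x; rewrite /supp. Qed.

Lemma CK_add (f g : X -> K) : in_CK T f -> in_CK T g -> in_CK T (fun y => f y + g y).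
Proof.
move=> /CK_iff [lf cf] /CK_iff [lg cg]; apply/CK_iff; split; first exact: lc_op2.
apply: compact_sub (compact_union cf cg) _ _; last by apply: nsupp_open; apply: lc_op2.
move=> x; rewrite /supp => H; apply: NNPP => /not_or_and [/NNPP a /NNPP b].
by apply: H; rewrite a b addr0.
Qed.

Lemma CK_mull (f g : X -> K) : in_CK T f -> locally_constant T g -> in_CK T (fun y => f y * g y).
Proof.
move=> cf lg; have lf := proj1 cf; apply: CK_sub cf _ _; first by apply: lc_op2.
by move=> x; rewrite /supp => H E; apply: H; rewrite E mul0r.
Qed.

Lemma CK_mulr (f g : X -> K) : locally_constant T f -> in_CK T g -> in_CK T (fun y => f y * g y).
Proof.
move=> lf cg; have lg := proj1 cg; apply: CK_sub cg _ _; first by apply: lc_op2.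
by move=> x; rewrite /supp => H E; apply: H; rewrite E mulr0.
Qed.

Lemma CKW_ext (W : X -> Prop) (f g : X -> K) : (forall x, f x = g x) -> in_CKW T W f -> in_CKW T W g.
Proof. by move=> E; have -> : g = f by apply: functional_extensionality. Qed.

Lemma CKW0 (W : X -> Prop) : in_CKW T W (fun _ => 0 : K).
Proof. by split => //; apply: CK0. Qed.

Lemma CKW_add (W : X -> Prop) (f g : X -> K) : in_CKW T W f -> in_CKW T W g ->
  in_CKW T W (fun y => f y + g y).
Proof. by move=> [cf wf] [cg wg]; split; [apply: CK_add | move=> x nW; rewrite wf // wg // addr0]. Qed.

Lemma CKW_opp (W : X -> Prop) (f : X -> K) : in_CKW T W f -> in_CKW T W (fun y => - f y).
Proof.
move=> [cf wf]; have lf := proj1 cf; split; last by move=> x nW; rewrite wf // oppr0.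
apply: CK_sub cf _ _; first by apply: lc_op1.
by move=> x; rewrite /supp => H E; apply: H; rewrite E oppr0.
Qed.

Lemma CKW_sum (W : X -> Prop) (I : Type) (s : list I) (F : I -> X -> K) :
  (forall i, In i s -> in_CKW T W (F i)) -> in_CKW T W (fun y => \sum_(i <- s) F i y).
Proof.
elim: s => [|i s IH] H.
  by apply: CKW_ext (CKW0 W) => x; rewrite big_nil.
apply: CKW_ext (CKW_add (H i (or_introl erefl)) (IH (fun j Hj => H j (or_intror Hj)))).
by move=> x; rewrite big_cons.
Qed.

Lemma sum_zero (I : Type) (s : list I) (F : I -> K) :
  (forall i, In i s -> F i = 0) -> \sum_(i <- s) F i = 0.
Proof.
elim: s => [|i s IH] H; first by rewrite big_nil.
by rewrite big_cons H ?IH ?add0r //; [move=> j Hj; apply: H; right | left].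
Qed.

End CK.

Section PA.
Variables (X : Type) (T : topology X) (K : fieldType) (G : Type) (Gs : group_str G)
  (phi : partial_action T Gs).

Local Notation "a * b" := (gmul Gs a b) : type_scope.

Lemma ginvK g : ginv Gs (ginv Gs g) = g.
Proof.
rewrite -[LHS](gmulr1 Gs) -(gmulV Gs g) gmulA.
by rewrite (gmulV Gs (ginv Gs g)) gmul1.
Qed.
Lemma ginv1 : ginv Gs (gone Gs) = gone Gs.
Proof. by rewrite -[LHS](gmulr1 Gs) gmulV. Qed.
Lemma mulKg g k : gmul Gs g (gmul Gs (ginv Gs g) k) = k.
Proof. by rewrite gmulA gmulrV gmul1. Qed.
Lemma mulVKg g k : gmul Gs (ginv Gs g) (gmul Gs g k) = k.
Proof. by rewrite gmulA gmulV gmul1. Qed.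

Lemma actK g z : dom phi (ginv Gs g) z -> act phi (ginv Gs g) (act phi g z) = z.
Proof.
move=> Hz; rewrite act_comp //; first by rewrite gmulV act_one.
by rewrite ginvK gmulV; apply: dom_one.
Qed.

Lemma actK' g x : dom phi g x -> act phi g (act phi (ginv Gs g) x) = x.
Proof.
move=> Hx; rewrite act_comp; first by rewrite gmulrV act_one.
  by rewrite ginvK.
by rewrite ginvK gmulrV; apply: dom_one.
Qed.

Lemma dom_act' g x : dom phi g x -> dom phi (ginv Gs g) (act phi (ginv Gs g) x).
Proof. by move=> Hx; apply: act_into; rewrite ginvK. Qed.

Lemma phi1 (F : X -> K) x : phi_fun phi (gone Gs) F x = F x.
Proof. by rewrite /phi_fun pif_T ?ginv1 ?act_one //; apply: dom_one. Qed.

Lemma phi_zero g x : phi_fun phi g (fun _ => 0 : K) x = 0.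
Proof. rewrite /phi_fun; case: (classic (dom phi g x)) => H; [by rewrite pif_T | by rewrite pif_F]. Qed.

Lemma phi_phi g (F : X -> K) x : (forall y, ~ dom phi g y -> F y = 0) ->
  phi_fun phi g (phi_fun phi (ginv Gs g) F) x = F x.
Proof.
move=> HF; rewrite /phi_fun; case: (classic (dom phi g x)) => H.
  by rewrite pif_T // pif_T ?ginvK ?actK' //; apply: dom_act'.
by rewrite pif_F // HF.
Qed.

Lemma phi_supp g (F : X -> K) x :
  supp (phi_fun phi g F) x <-> dom phi g x /\ supp F (act phi (ginv Gs g) x).
Proof.
rewrite /supp /phi_fun; case: (classic (dom phi g x)) => H.
  by rewrite pif_T //; tauto.
by rewrite pif_F //; tauto.
Qed.

Lemma phi_CK g (F : X -> K) : hausdorff T -> in_CK T F ->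
  (forall y, ~ dom phi (ginv Gs g) y -> F y = 0) -> in_CKW T (dom phi g) (phi_fun phi g F).
Proof.
move=> hX /CK_iff [lF cF] HF.
have cS : compact T (fun x => dom phi g x /\ supp F (act phi (ginv Gs g) x)).
  move=> Ix Fi oF cov.
  pose Gi i := fun z => dom phi (ginv Gs g) z /\ Fi i (act phi g z).
  have oG : forall i, is_open T (Gi i) by move=> i; apply: act_cont.
  have covG : forall z, supp F z -> exists i, Gi i z.
    move=> z sz; have dz : dom phi (ginv Gs g) z by apply: NNPP => /HF.
    have [i Hi] := cov (act phi g z) (conj (act_into dz) (eq_ind_r (supp F) sz (actK dz))).
    by exists i.
  have [s Hs] := cF Ix Gi oG covG.
  exists s => x [dx sx]; have [i [Hi [_ Fx]]] := Hs _ sx.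
  by exists i; split => //; rewrite actK' in Fx.
have lphi : locally_constant T (phi_fun phi g F).
  move=> x; case: (classic (dom phi g x)) => dx.
    have [U [oU [Ux HU]]] := lF (act phi (ginv Gs g) x).
    exists (fun x' => dom phi (ginv Gs (ginv Gs g)) x' /\ U (act phi (ginv Gs g) x')).
    split; first by apply: act_cont.
    split; first by rewrite ginvK.
    move=> y [dy Uy]; rewrite ginvK in dy.
    by rewrite /phi_fun !pif_T // (HU _ Uy).
  exists (fun x => ~ (dom phi g x /\ supp F (act phi (ginv Gs g) x))).
  split; first exact: compact_closed.
  split; first by case.
  move=> y Hy; rewrite /phi_fun (pif_F _ _ dx).
  case: (classic (dom phi g y)) => dy; last by rewrite pif_F.
  by rewrite pif_T //; apply: NNPP => H; apply: Hy.
split; last by move=> x nx; rewrite /phi_fun pif_F.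
apply/CK_iff; split => //; apply: compact_ext cS => x; by rewrite phi_supp.
Qed.

End PA.

Section Main.
Variables (X : Type) (T : topology X) (K : fieldType) (G : Type) (Gs : group_str G)
  (phi : partial_action T Gs) (hX : hausdorff T).

Definition single (g : G) (h : X -> K) : pskew X K G := fun k => pif (k = g) h (fun _ => 0).

Lemma single_at g h : single g h g = h.
Proof. by rewrite /single pif_T. Qed.
Lemma single_off g h k : k <> g -> single g h k = (fun _ => 0).
Proof. by move=> H; rewrite /single pif_F. Qed.

Lemma supp_single g h : supp_list (single g h) (g :: nil).
Proof.
split; first by constructor; [case | constructor].
by move=> k Hk x; rewrite single_off //= => E; apply: Hk; left.
Qed.

Lemma single_CKW (W : G -> X -> Prop) g h : in_CKW T (W g) h ->
  forall k, in_CKW T (W k) (single g h k).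
Proof.
move=> H k; case: (classic (k = g)) => [->|nk]; first by rewrite single_at.
by rewrite single_off //; apply: CKW0.
Qed.

Lemma skew_single g h : in_CKW T (dom phi g) h -> in_skew phi (single g h).
Proof.
move=> H; split; first by exists (g :: nil); apply: supp_single.
exact: (single_CKW (W := fun k => dom phi k)).
Qed.

Lemma skewV_single (V : X -> Prop) g h : in_CKW T (fun x => V x /\ dom phi g x) h ->
  in_skew_V phi V (single g h).
Proof.
move=> H; split; first by exists (g :: nil); apply: supp_single.
exact: (single_CKW (W := fun k x => V x /\ dom phi k x)).
Qed.

Lemma phi1f (F : X -> K) : phi_fun phi (gone Gs) F = F.
Proof. by apply: functional_extensionality => x; apply: phi1. Qed.

Lemma phi_zero' g (F : X -> K) x : (forall y, F y = 0) -> phi_fun phi g F x = 0.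
Proof.
move=> H; have -> : F = (fun _ => 0) by apply: functional_extensionality.
exact: phi_zero.
Qed.

Lemma phi_phi' g (F : X -> K) : (forall y, ~ dom phi (ginv Gs g) y -> F y = 0) ->
  phi_fun phi (ginv Gs g) (phi_fun phi g F) = F.
Proof.
move=> H; apply: functional_extensionality => x.
have := @phi_phi X T K G Gs phi (ginv Gs g) F x H; by rewrite ginvK.
Qed.

Lemma mul_one_single (f b : X -> K) g :
  skew_mul phi (gone Gs :: nil) (single (gone Gs) f) (single g b) =
  single g (fun y => f y * b y).
Proof.
apply: functional_extensionality => k; apply: functional_extensionality => x.
rewrite /skew_mul big_cons big_nil addr0 ginv1 !phi1f single_at (gmul1 Gs).
case: (classic (k = g)) => [->|nk]; first by rewrite !single_at.
by rewrite !single_off // mulr0.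
Qed.

Lemma supp_list_of (c : pskew X K G) s : (forall g, ~ In g s -> forall x, c g x = 0) ->
  exists s', supp_list c s'.
Proof.
move=> H; pose d := fun x y : G => excluded_middle_informative (x = y).
exists (nodup d s); split; first exact: NoDup_nodup.
by move=> g Hg; apply: H => /(nodup_In d) .
Qed.

Definition ind (F : X -> K) : X -> K := fun y => if F y == 0 then 0 else 1.

Lemma ind_mul (F : X -> K) y : ind F y * F y = F y.
Proof. by rewrite /ind; case: eqP => [->|_]; rewrite ?mul0r ?mul1r. Qed.

Lemma ind_CK (F : X -> K) : in_CK T F -> in_CK T (ind F).
Proof.
move=> cF; have lF := proj1 cF; apply: CK_sub cF _ _.
  exact: (lc_op1 (fun c => if c == 0 then 0 else 1) lF).
by move=> x; rewrite /supp /ind; case: eqP.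
Qed.

Lemma back (J : pskew X K G -> Prop) (hJ : is_ideal phi J) g (F : X -> K) :
  in_CK T F -> (forall y, ~ dom phi (ginv Gs g) y -> F y = 0) ->
  J (single (ginv Gs g) F) -> J (delta_one Gs (phi_fun phi g F)).
Proof.
move=> cF vF JF; case: hJ => _ [_ [_ [_ [Hl _]]]].
have ci : in_CK T (ind F) by apply: ind_CK.
have vi : forall y, ~ dom phi (ginv Gs g) y -> ind F y = 0.
  by move=> y /vF; rewrite /ind => ->; rewrite eqxx.
have cb := @phi_CK X T K G Gs phi g (ind F) hX ci vi.
have := Hl _ _ _ (skew_single cb) (supp_single g _) JF.
have -> : skew_mul phi (g :: nil) (single g (phi_fun phi g (ind F))) (single (ginv Gs g) F)
   = delta_one Gs (phi_fun phi g F); last by [].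
apply: functional_extensionality => k; apply: functional_extensionality => x.
rewrite /skew_mul big_cons big_nil addr0 single_at phi_phi' //.
case: (classic (k = gone Gs)) => [->|nk].
  rewrite (gmulr1 Gs) single_at /delta_one pif_T //.
  by congr (phi_fun _ _ _ _); apply: functional_extensionality => y; apply: ind_mul.
rewrite single_off; last by move=> E; apply: nk; rewrite -(mulKg Gs g k) E gmulrV.
by rewrite /delta_one pif_F // phi_zero' // => y; rewrite mulr0.
Qed.

End Main.

Section Ideal.
Variables (X : Type) (T : topology X) (K : fieldType) (G : Type) (Gs : group_str G)
  (phi : partial_action T Gs) (hX : hausdorff T)
  (I : pskew X K G -> Prop) (hI : is_ideal phi I).

Let V := V_of Gs I.

Lemma I_CK f : I (delta_one Gs f) -> in_CK T f.
Proof.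
case: hI => Hs _ /Hs [_ /(_ (gone Gs))]; rewrite /delta_one pif_T //; by case.
Qed.

Lemma skew_add_single (g : G) (h1 h2 : X -> K) :
  skew_add (single g h1) (single g h2) = single g (fun y => h1 y + h2 y).
Proof.
apply: functional_extensionality => k; apply: functional_extensionality => x.
rewrite /skew_add; case: (classic (k = g)) => [->|nk]; first by rewrite !single_at.
by rewrite !single_off // addr0.
Qed.

Lemma cover_lemma (L : list (X -> K)) : (forall f, In f L -> I (delta_one Gs f)) ->
  forall g h, in_CK T h -> (forall x, ~ dom phi g x -> h x = 0) ->
  (forall x, supp h x -> exists f, In f L /\ supp f x) -> I (single g h).
Proof.
case: hI => _ [I0 [Iadd [_ [_ Ir]]]].
elim: L => [|f L IH] HL g h ch vh cov.
  have -> : single g h = @skew0 X K G; last by [].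
  apply: functional_extensionality => k; apply: functional_extensionality => x.
  rewrite /skew0; case: (classic (k = g)) => [->|nk]; last by rewrite single_off.
  rewrite single_at; apply: NNPP => sx; by have [f [[] _]] := cov x sx.
have If : I (delta_one Gs f) by apply: HL; left.
have lf := proj1 (I_CK If); have lh := proj1 ch.
pose b := fun y => h y * (f y)^-1.
pose h' := fun y => h y * (1 - f y * (f y)^-1).
have -> : single g h = skew_add (single g (fun y => f y * b y)) (single g h').
  rewrite skew_add_single; congr single; apply: functional_extensionality => y.
  rewrite /b /h' mulrCA mulrBr addrC subrK mulr1 //.
apply: Iadd.
  rewrite -(@mul_one_single X T K G Gs phi); apply: Ir; first exact: If.
    exact: supp_single.
  apply: skew_single; split; last by move=> x /vh; rewrite /b => ->; rewrite mul0r.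
  apply: CK_sub ch (lc_op2 (fun u v => u * v^-1) lh lf) _.
  by move=> x; rewrite /supp => H E; apply: H; rewrite E mul0r.
apply: IH; first by move=> f' Hf'; apply: HL; right.
- apply: CK_sub ch (lc_op2 (fun u v => u * (1 - v * v^-1)) lh lf) _.
  by move=> x; rewrite /supp => H E; apply: H; rewrite E mul0r.
- by move=> x /vh; rewrite /h' => ->; rewrite mul0r.
move=> x sx.
have shx : supp h x by move=> E; apply: sx; rewrite /h' E mul0r.
have nfx : ~ supp f x.
  by move=> sf; apply: sx; rewrite /h' mulfV ?subrr ?mulr0 //; apply/eqP.
have [f' [[E|Hf'] sf']] := cov x shx; first by rewrite -E in sf'.
by exists f'.
Qed.

Lemma P1single g h : in_CKW T (fun x => V x /\ dom phi g x) h -> I (single g h).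
Proof.
move=> [ch vh]; have cs := proj2 (proj1 (CK_iff _ _) ch).
pose Ix := {f : X -> K | I (delta_one Gs f)}.
have oF : forall i : Ix, is_open T (supp (proj1_sig i)).
  by move=> [f Hf]; apply: supp_open; case: (I_CK Hf).
have cov : forall x, supp h x -> exists i : Ix, supp (proj1_sig i) x.
  move=> x sx; have [[f [If sf]] _] : V x /\ dom phi g x.
    by apply: NNPP => H; apply: sx; apply: vh.
  by exists (exist _ f If).
have [s Hs] := cs Ix _ oF cov.
apply: (@cover_lemma (map (@proj1_sig _ _) s)).
- by move=> f /in_map_iff [[f' If'] [/= <- _]].
- exact: ch.
- by move=> x dx; apply: vh => -[].
move=> x /Hs [i [Hi si]]; exists (proj1_sig i); split => //.
by apply: in_map.
Qed.

Lemma P1 a : in_skew_V phi V a -> I a.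
Proof.
case: hI => _ [I0 [Iadd _]].
move=> [[s [_ Hs]] Ha]; elim: s a Hs Ha => [|g s IH] a Hs Ha.
  have -> : a = @skew0 X K G; last by [].
  apply: functional_extensionality => k; apply: functional_extensionality => x.
  by apply: Hs.
pose a' : pskew X K G := fun k => pif (k = g) (fun _ : X => 0 : K) (a k).
have -> : a = skew_add (single g (a g)) a'.
  apply: functional_extensionality => k; apply: functional_extensionality => x.
  rewrite /skew_add /a'; case: (classic (k = g)) => [->|nk].
    by rewrite single_at pif_T // addr0.
  by rewrite single_off // pif_F // add0r.
apply: Iadd; first exact: P1single.
apply: IH.
  move=> k Hk x; rewrite /a'; case: (classic (k = g)) => nk; first by rewrite pif_T.
  by rewrite pif_F //; apply: Hs => -[E|//]; apply: nk.
move=> k; rewrite /a'; case: (classic (k = g)) => nk; first by rewrite pif_T //; apply: CKW0.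
by rewrite pif_F.
Qed.

Lemma invV (g : G) (F : X -> K) : in_CKW T (fun x => V x /\ dom phi (ginv Gs g) x) F ->
  forall x, ~ V x -> phi_fun phi g F x = 0.
Proof.
move=> HF x nV; apply: NNPP => sx; apply: nV.
have IF := P1single HF.
have cF := proj1 HF.
have := @back X T K G Gs phi hX I hI g F cF _ IF.
move=> /(_ _) H; exists (phi_fun phi g F); split => //; apply: H.
by move=> y ny; apply: (proj2 HF) => -[].
Qed.

Lemma term_lemma (g k : G) (A B : X -> K) : in_CKW T (dom phi g) A ->
  in_CKW T (dom phi (gmul Gs (ginv Gs g) k)) B ->
  (forall x, ~ V x -> phi_fun phi (ginv Gs g) A x * B x = 0) ->
  in_CKW T (fun x => V x /\ dom phi k x)
    (phi_fun phi g (fun y => phi_fun phi (ginv Gs g) A y * B y)).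
Proof.
move=> cA cB vV.
have vA : forall y, ~ dom phi (ginv Gs (ginv Gs g)) y -> A y = 0.
  by rewrite ginvK; apply: (proj2 cA).
have cA' := @phi_CK X T K G Gs phi (ginv Gs g) A hX (proj1 cA) vA.
have cF : in_CK T (fun y => phi_fun phi (ginv Gs g) A y * B y).
  exact: CK_mull (proj1 cA') (proj1 (proj1 cB)).
have vF : forall y, ~ dom phi (ginv Gs g) y -> phi_fun phi (ginv Gs g) A y * B y = 0.
  by move=> y /(proj2 cA') ->; rewrite mul0r.
have cP := @phi_CK X T K G Gs phi g _ hX cF vF.
have cFV : in_CKW T (fun x => V x /\ dom phi (ginv Gs g) x)
    (fun y => phi_fun phi (ginv Gs g) A y * B y).
  split => // y ny; case: (classic (V y)) => Vy; last exact: vV.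
  by apply: vF => dy; apply: ny.
have iV := invV cFV.
split; first exact: (proj1 cP).
move=> x nx; case: (classic (V x)) => Vx; last exact: iV.
apply: NNPP => sx; apply: nx; split => //.
have [dx sF] := proj1 (@phi_supp X T K G Gs phi g _ x) sx.
set y := act phi (ginv Gs g) x in sF.
have sB : supp B y by move=> E; apply: sF; rewrite E mulr0.
have dh : dom phi (gmul Gs (ginv Gs g) k) y by apply: NNPP => /(proj2 cB).
have dy : dom phi (ginv Gs g) y by apply: dom_act'.
have := proj2 (act_dom phi g (gmul Gs (ginv Gs g) k) x) (ex_intro _ y (conj dy (conj dh (actK' dx)))).
by rewrite mulKg => -[].
Qed.

End Ideal.

Theorem mainTheorem9 (X : Type) (T : topology X)
  (hX : hausdorff T) (lcX : locally_compact T) (tdX : totally_disconnected T)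
  (G : Type) (Gs : group_str G) (K : fieldType) (phi : partial_action T Gs)
  (I : pskew X K G -> Prop) (hI : is_ideal phi I) :
  let V := V_of Gs I in
  (forall a, in_skew_V (K:=K) phi V a -> I a) /\
  is_ideal phi (in_skew_V (K:=K) phi V) /\
  is_graded (in_skew_V (K:=K) phi V) /\
  (forall J : pskew X K G -> Prop, is_ideal phi J -> is_graded J ->
     (forall a, J a -> I a) -> forall a, J a -> in_skew_V (K:=K) phi V a).
Proof.
move=> V.
split; first by move=> a; apply: (P1 hI).
split.
  split.
    move=> a [Hs Ha]; split => // g; case: (Ha g) => c w; split => // x nx.
    by apply: w => -[_ /nx].
  split.
    split; first by exists nil; split; [constructor | by []].
    by move=> g; apply: CKW0.
  split.
    move=> a b [[s1 [_ H1]] Ha] [[s2 [_ H2]] Hb]; split; last by move=> g; apply: CKW_add.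
    apply: (@supp_list_of X K G _ (s1 ++ s2)) => g Hg x.
    rewrite /skew_add H1 ?H2 ?addr0 // => H; apply: Hg; apply: in_or_app; tauto.
  split.
    move=> a [[s [_ H1]] Ha]; split; last by move=> g; apply: CKW_opp.
    apply: (@supp_list_of X K G _ s) => g Hg x.
    by rewrite /skew_opp H1 // oppr0.
  split.
    move=> a b s [_ Ha] [_ Hs] [[sb [_ Hb]] Hb'].
    split.
      apply: (@supp_list_of X K G _ (flat_map (fun g => map (gmul Gs g) sb) s)) => k Hk x.
      rewrite /skew_mul; apply: sum_zero => g Hg; apply: phi_zero' => y.
      rewrite Hb ?mulr0 // => Hin; apply: Hk; apply/in_flat_map; exists g; split => //.
      by apply/in_map_iff; exists (gmul Gs (ginv Gs g) k); split => //; apply: mulKg.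
    move=> k; apply: CKW_sum => g _; apply: (term_lemma hX hI).
    - exact: Ha.
    - have [c w] := Hb' (gmul Gs (ginv Gs g) k); split => // x nx; by apply: w => -[_ /nx].
    - by move=> x nV; rewrite (proj2 (Hb' _)) ?mulr0 // => -[].
  move=> a b s [[sa [_ Hsa]] Ha] [_ Hs] [[sb [_ Hb]] Hb'].
  split.
    apply: (@supp_list_of X K G _ (flat_map (fun g => map (gmul Gs g) sb) s)) => k Hk x.
    rewrite /skew_mul; apply: sum_zero => g Hg; apply: phi_zero' => y.
    rewrite Hb ?mulr0 // => Hin; apply: Hk; apply/in_flat_map; exists g; split => //.
    by apply/in_map_iff; exists (gmul Gs (ginv Gs g) k); split => //; apply: mulKg.
  move=> k; apply: CKW_sum => g _; apply: (term_lemma hX hI).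
  - have [c w] := Ha g; split => // x nx; by apply: w => -[_ /nx].
  - exact: Hb'.
  move=> x nV.
  have HA : in_CKW T (fun x => V x /\ dom phi (ginv Gs (ginv Gs g)) x) (a g).
    by rewrite ginvK; apply: Ha.
  by rewrite (invV hX hI HA) // mul0r.
split.
  by move=> a g [_ Ha]; apply: skewV_single; apply: Ha.
move=> J hJ gJ JI a Ja.
have [[s Hs] Ha] := proj1 hJ a Ja.
split; first by exists s.
move=> g; have [cg vg] := Ha g; split => // x nx.
case: (classic (dom phi g x)) => dx; last exact: vg.
have nV : ~ V x by move=> Vx; apply: nx.
have Jg' : J (single (ginv Gs (ginv Gs g)) (a g)) by rewrite ginvK; apply: gJ.
have vg' : forall y, ~ dom phi (ginv Gs (ginv Gs g)) y -> a g y = 0 by rewrite ginvK.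
have /JI HI := back hX hJ cg vg' Jg'.
have cF' := @phi_CK X T K G Gs phi (ginv Gs g) (a g) hX cg vg'.
have cFV : in_CKW T (fun x => V x /\ dom phi (ginv Gs g) x) (phi_fun phi (ginv Gs g) (a g)).
  split; first exact: (proj1 cF').
  move=> y ny; apply: NNPP => sy; apply: ny; split; last first.
    by apply: NNPP => /(proj2 cF').
  by exists (phi_fun phi (ginv Gs g) (a g)); split.
have := invV hX hI cFV nV.
by rewrite phi_phi.
Qed.
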